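(* Let $f,g_1,\dots,g_m\in\mathrm{CN}^n$ have a common convex domain $M\subseteq\mathbb{R}^n$, let $D\subseteq M$, let $t(x)=\max_{1\le i\le m} g_i(x)$, $(s)_+=\max\{s,0\}$, and $h(x)=((t(x))_+,f(x))\in\mathbb{R}^2$. Then $h$ is conic with respect to the lexicographic order on $\mathbb{R}^2$, and if the feasible set $S=\{x\in D: g_i(x)\le 0 \text{ for all } i\}$ is nonempty, then the set of minimizers of $f$ over $S$ coincides with the set of lexicographic minimizers of $h$ over $D$.
   Context: A function $f:\mathrm{dom}(f)\to \Omega$, with $\mathrm{dom}(f)\subseteq\mathbb{R}^n$ convex and $\Omega$ totally ordered ($\mathbb{R}$, or $\mathbb{R}^2$ with lexicographic order), is conic if for all $y,z\in\mathrm{dom}(f)$ and $t\ge 0$ with $f(y)\le f(z)$ and $z+t(z-y)\in\mathrm{dom}(f)$, one has $f(z+t(z-y))\ge f(z)$. $\mathrm{CN}^n$ is the class of real-valued conic functions on convex subsets of $\mathbb{R}^n$. *)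

(* Defs.v *)
(* R^n is rendered as 'rV[R]_n over an arbitrary real field R
   (the statement is purely order-algebraic, so this generalizes R = reals). *)
From HB Require Import structures.
From mathcomp Require Import all_boot all_order all_algebra.
Set Implicit Arguments. Unset Strict Implicit. Unset Printing Implicit Defensive.
Import Order.TTheory GRing.Theory Num.Theory.
Local Open Scope ring_scope.

Section Defs.
Variable R : realFieldType.
Variable n : nat.
Notation vec := 'rV[R]_n.

Definition convex (M : vec -> Prop) : Prop :=
  forall x y (l : R), M x -> M y -> 0 <= l -> l <= 1 ->
    M ((1 - l) *: x + l *: y).

Definition conic {T : Type} (le : T -> T -> Prop) (M : vec -> Prop)
    (f : vec -> T) : Prop :=
  forall y z (t : R), M y -> M z -> 0 <= t -> le (f y) (f z) ->
    M (z + t *: (z - y)) -> le (f z) (f (z + t *: (z - y))).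

Definition lex_le (a b : R * R) : Prop :=
  a.1 < b.1 \/ (a.1 = b.1 /\ a.2 <= b.2).

Definition rle (a b : R) : Prop := a <= b.

Definition CN (M : vec -> Prop) (f : vec -> R) : Prop :=
  convex M /\ conic rle M f.

(* t(x) = max of the constraint functions g_1..g_{m+1} (nonempty family) *)
Definition tmax (m : nat) (g : 'I_m.+1 -> vec -> R) (x : vec) : R :=
  \big[Num.max/g ord0 x]_(i < m.+1) g i x.

Definition pospart (s : R) : R := Num.max s 0.

Definition hfun (m : nat) (g : 'I_m.+1 -> vec -> R) (f : vec -> R)
    (x : vec) : R * R := (pospart (tmax g x), f x).

Definition feasible (m : nat) (g : 'I_m.+1 -> vec -> R) (D : vec -> Prop)
    (x : vec) : Prop := D x /\ forall i, g i x <= 0.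

Definition is_minimizer {T : Type} (le : T -> T -> Prop) (f : vec -> T)
    (S : vec -> Prop) (x : vec) : Prop :=
  S x /\ forall y, S y -> le (f x) (f y).
End Defs.

(* Main.v *)
Require Import Defs.
From HB Require Import structures.
From mathcomp Require Import all_boot all_order all_algebra.
Import Order.TTheory GRing.Theory Num.Theory.
Local Open Scope ring_scope.

Section Aux.
Variable R : realFieldType.

Lemma bigmax_seq_ge {I : eqType} (F : I -> R) x0 (s : seq I) :
  x0 <= \big[Num.max/x0]_(j <- s) F j /\
  forall i, i \in s -> F i <= \big[Num.max/x0]_(j <- s) F j.
Proof.
elim: s => [|a s [IH1 IH2]]; first by rewrite big_nil; split => // i.
rewrite big_cons; split; first by rewrite le_max IH1 orbT.
move=> i; rewrite inE => /predU1P [->|/IH2 H]; first by rewrite le_max lexx.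
by rewrite le_max H orbT.
Qed.

Lemma bigmax_seq_ex {I : eqType} (F : I -> R) x0 (s : seq I) :
  \big[Num.max/x0]_(j <- s) F j = x0 \/
  exists2 i, i \in s & \big[Num.max/x0]_(j <- s) F j = F i.
Proof.
elim: s => [|a s IH]; first by rewrite big_nil; left.
rewrite big_cons; set v := \big[_/_]_(j <- s) F j in IH *.
case: (leP (F a) v) => H.
- case: IH => [->|[i Hi ->]]; first by left.
  by right; exists i => //; rewrite inE Hi orbT.
- right; exists a => //; exact: mem_head.
Qed.

Variable n : nat.

Lemma tmax_ge m (g : 'I_m.+1 -> 'rV[R]_n -> R) x i : g i x <= tmax g x.
Proof.
rewrite /tmax; have [_ H] := bigmax_seq_ge (fun i => g i x) (g ord0 x) (index_enum 'I_m.+1).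
exact: H (mem_index_enum i).
Qed.

Lemma tmax_ex m (g : 'I_m.+1 -> 'rV[R]_n -> R) x : exists i, tmax g x = g i x.
Proof.
rewrite /tmax; case: (bigmax_seq_ex (fun i => g i x) (g ord0 x) (index_enum 'I_m.+1)).
- by move=> ->; exists ord0.
- by move=> [i _ ->]; exists i.
Qed.

Lemma strict_conic M (F : 'rV[R]_n -> R) y z t :
  conic (@rle R) M F -> M y -> M z -> 0 < t -> F y < F z ->
  M (z + t *: (z - y)) -> F z < F (z + t *: (z - y)).
Proof.
move=> C My Mz t0 lt Mw.
have le1 : F z <= F (z + t *: (z - y)).
  by apply: C => //; [exact: ltW | exact: ltW].
rewrite lt_neqAle le1 andbT; apply/negP => /eqP E.
have E2 : z + t^-1 *: (z - (z + t *: (z - y))) = y.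
  rewrite opprD addrA subrr add0r scalerN scalerA mulVf ?gt_eqF // scale1r.
  by rewrite opprB addrC subrK.
have := C (z + t *: (z - y)) z t^-1 Mw Mz.
rewrite E2 invr_ge0 ltW // => /(_ isT) H.
have : F z <= F y by apply: H => //; rewrite /rle E.
by rewrite leNgt lt.
Qed.

Lemma pos_conic M m (g : 'I_m.+1 -> 'rV[R]_n -> R) :
  (forall i, conic (@rle R) M (g i)) ->
  conic (@rle R) M (fun x => pospart (tmax g x)).
Proof.
move=> C y z t My Mz t0; rewrite /rle /pospart => H Mw.
case: (leP (tmax g z) 0) => Tz.
  by rewrite le_max lexx orbT.
rewrite le_max; apply/orP; left.
case: (tmax_ex _ g z) => i Ei; rewrite Ei.
apply: le_trans (tmax_ge _ g _ i); apply: C => //; rewrite /rle.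
apply: le_trans (tmax_ge _ g y i) _; rewrite -Ei.
rewrite (max_l (ltW Tz)) in H; apply: le_trans H; rewrite le_max lexx //.
Qed.

End Aux.

Theorem mainTheorem4 (R : realFieldType) (n m : nat)
    (M D : 'rV[R]_n -> Prop) (f : 'rV[R]_n -> R) (g : 'I_m.+1 -> 'rV[R]_n -> R) :
  CN M f -> (forall i, CN M (g i)) ->
  (forall x, D x -> M x) ->
  conic (@lex_le R) M (hfun g f) /\
  ((exists x, feasible g D x) ->
   forall x, is_minimizer (@rle R) f (feasible g D) x <->
             is_minimizer (@lex_le R) (hfun g f) D x).
Proof.
move=> [_ Cf] Cg DM.
have Cp := @pos_conic _ _ _ _ g (fun i => (Cg i).2).
set p := fun x => pospart (tmax g x) in Cp.
have p0 : forall x, 0 <= p x by move=> x; rewrite /p /pospart le_max lexx orbT.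
have pfeas : forall x, p x = 0 <-> forall i, g i x <= 0.
  move=> x; rewrite /p /pospart; split.
    move=> E i; apply: le_trans (tmax_ge _ _ _ g x i) _; rewrite -E le_max lexx //.
  move=> H; case: (tmax_ex _ _ _ g x) => i Ei; rewrite max_r // Ei; exact: H.
split.
  move=> y z t My Mz t0; rewrite /lex_le /hfun /= -/(p y) -/(p z) => H Mw.
  rewrite -/(p (z + t *: (z - y))).
  case: (leP t 0) => t0'.
    have -> : t = 0 by apply/eqP; rewrite eq_le t0' t0.
    by rewrite scale0r addr0; right; split.
  case: H => [lt|[E le]].
    by left; exact: (strict_conic _ _ _ _ _ _ _ Cp My Mz t0' lt Mw).
  have h1 : p z <= p (z + t *: (z - y)) by apply: Cp => //; rewrite /rle E.
  have h2 : f z <= f (z + t *: (z - y)) by apply: Cf.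
  move: h1; rewrite le_eqVlt => /orP [/eqP ->|lt]; [by right | by left].
move=> [x0 [Dx0 Fx0]] x; rewrite /is_minimizer /feasible /lex_le /hfun /= -!/(p _).
split.
  move=> [[Dx Fx] Hmin]; split => // y Dy.
  have px : p x = 0 by apply/pfeas.
  rewrite -/(p x) -/(p y) px.
  case: (ltP 0 (p y)) => py; first by left.
  have py0 : p y = 0 by apply/eqP; rewrite eq_le py p0.
  right; split => //; apply: Hmin; split => //; exact/pfeas.
move=> [Dx Hmin].
have px : p x = 0.
  case: (Hmin x0 Dx0); rewrite -/(p x) -/(p x0) (proj2 (pfeas x0) Fx0).
    by rewrite ltNge p0.
  by case.
split; first by split => //; exact/pfeas.
move=> y [Dy Fy]; case: (Hmin y Dy); rewrite -/(p x) -/(p y) px (proj2 (pfeas y) Fy).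
  by rewrite ltxx.
by case.
Qed.
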